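(* Let $f=a_0+a_1x+\cdots+a_nx^n\in\mathbb{Z}[x]$ be a primitive polynomial. Suppose that $a_0=\pm p^k d$ for some positive integers $k$ and $d$ and a prime number $p$ with $p\nmid a_1 d$, and that every zero $\theta\in\mathbb{C}$ of $f$ satisfies $|\theta|>d$. Then $f$ is irreducible in $\mathbb{Z}[x]$.
   Context: A polynomial $a_0+a_1x+\cdots+a_nx^n\in\mathbb{Z}[x]$ is primitive if $\gcd(a_0,a_1,\ldots,a_n)=1$. *)

(* Defs.v *)
From HB Require Import structures.
From mathcomp Require Import all_boot all_order all_algebra all_field.
Set Implicit Arguments. Unset Strict Implicit. Unset Printing Implicit Defensive.
Import Order.TTheory GRing.Theory Num.Theory.
Local Open Scope ring_scope.

Definition primitive_zpoly (f : {poly int}) : bool :=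
  (\big[gcdn/0%N]_(i < size f) absz f`_i == 1%N).

Definition irreducible_in_Zx (f : {poly int}) : Prop :=
  f != 0 /\ f \isn't a GRing.unit /\
  forall g h : {poly int}, f = g * h -> g \is a GRing.unit \/ h \is a GRing.unit.

(* Main.v *)
Require Import Defs.
From mathcomp Require Import all_boot all_order all_algebra all_field.
Import Order.TTheory GRing.Theory Num.Theory.
Local Open Scope ring_scope.
From HB Require Import structures.

Lemma int_unit_abs (x : int) : x \is a GRing.unit -> absz x = 1%N.
Proof.
case/unitrP=> y [_ xy]; have := congr1 absz xy; rewrite abszM /=.
by move/eqP; rewrite muln_eq1 => /andP[/eqP].
Qed.

Lemma abs_int_unit (x : int) : absz x = 1%N -> x \is a GRing.unit.
Proof.
case: x => [n|n] /= H.
  by move: H => /= ->; exact: unitr1.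
by move: H => [->]; rewrite NegzE unitrN; exact: unitr1.
Qed.

Lemma coef1M (g h : {poly int}) : (g * h)`_1 = g`_0 * h`_1 + g`_1 * h`_0.
Proof. by rewrite coefM !big_ord_recl big_ord0 addr0. Qed.

Lemma key (f g h : {poly int}) (d : nat) : f = g * h -> (1 < size h)%N -> (0 < d)%N ->
  (forall theta : algC, root (map_poly intr f) theta -> d%:R < `|theta|) ->
  (d < absz (h`_0)%R)%N.
Proof.
move=> fgh sh d0 Hr.
pose hC : {poly algC} := map_poly intr h.
have szh : size hC = size h by rewrite size_map_inj_poly //; apply: intr_inj.
have [r Er] := closed_field_poly_normal hC.
have rootr z : z \in r -> d%:R < `|z|.
  move=> zr; apply: Hr; rewrite fgh rmorphM /= rootM; apply/orP; right.
  rewrite -/hC Er rootZ ?root_prod_XsubC //.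
  by rewrite lead_coef_eq0 -size_poly_eq0 szh -lt0n (ltn_trans _ sh).
have h0 : (h`_0)%:~R = hC.[0] by rewrite horner_coef0 coef_map.
have : (d%:R : algC) < `|(h`_0)%:~R|.
  rewrite h0 Er hornerZ horner_prod normrM normr_prod.
  have szr : size r = (size h).-1.
    by rewrite -szh {1}Er size_scale ?size_prod_XsubC // lead_coef_eq0 -size_poly_eq0 szh -lt0n (ltn_trans _ sh).
  case: r Er rootr szr => [|z0 r'] Er rootr szr.
    by move: sh szr; case: (size h) => [|[|n]].
  rewrite big_cons hornerXsubC sub0r normrN.
  have lc1 : 1 <= `|lead_coef hC|.
    rewrite (lead_coef_map_inj (@intr_inj _)) //.
    rewrite -intr_norm.
    have : (lead_coef h != 0) by rewrite lead_coef_eq0 -size_poly_eq0 -lt0n (ltn_trans _ sh).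
    rewrite -absz_gt0 -natr_absz => H.
    by rewrite ler1n.
  have z1 : d%:R < `|z0| by apply: rootr; rewrite mem_head.
  have P1 : 1 <= \prod_(j <- r') `|(('X - j%:P).[0])|.
    rewrite big_seq; apply: (big_ind (fun x : algC => 1 <= x)) => //.
      by move=> x y; apply: mulr_ege1.
    move=> z zr; rewrite hornerXsubC sub0r normrN.
    apply: le_trans (ltW (rootr z _)); first by rewrite ler1n.
    by rewrite in_cons zr orbT.
  apply: (lt_le_trans z1).
  rewrite -[X in X <= _]mul1r; apply: ler_pM => //.
  by rewrite -[X in X <= _]mulr1; apply: ler_pM.
by rewrite -intr_norm -natr_absz ltr_nat.
Qed.

Lemma Lfac (f g h : {poly int}) (p k d : nat) :
  primitive_zpoly f -> prime p -> (0 < d)%N ->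
  (absz (f`_0)%R = (p ^ k * d)%N) -> f != 0 ->
  (forall theta : algC, root (map_poly intr f) theta -> d%:R < `|theta|) ->
  f = g * h -> h \isn't a GRing.unit -> ~~ (p %| absz (h`_0)%R)%N -> False.
Proof.
move=> prim pp d0 f0 fn0 Hr fgh hnu php.
have hn0 : h != 0 by apply: contraNneq fn0 => h0; rewrite fgh h0 mulr0.
have [sh1|sh2] := leqP (size h) 1.
  have Eh := size1_polyC sh1.
  move/negP: hnu; apply; rewrite poly_unitE; apply/andP; split.
    by rewrite eqn_leq sh1 lt0n size_poly_eq0.
  apply: abs_int_unit; apply/eqP; rewrite -dvdn1.
  move: prim; rewrite /primitive_zpoly => /eqP <-.
  apply/dvdn_biggcdP => i _.
  have E j : f`_j = g`_j * h`_0 by rewrite fgh {1}Eh coefMC.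
  by rewrite E abszM dvdn_mull.
have lt := @key f g h d fgh sh2 d0 Hr.
have : (absz (h`_0)%R %| d)%N.
  rewrite -(@Gauss_dvdr _ (p ^ k)); last first.
    by rewrite coprimeXr // coprime_sym prime_coprime.
  by rewrite -f0 fgh coef0M abszM dvdn_mull.
move/(dvdn_leq d0); by rewrite leqNgt lt.
Qed.

Theorem theorem22 (f : {poly int}) (p k d : nat) :
  primitive_zpoly f ->
  prime p -> (0 < k)%N -> (0 < d)%N ->
  (f`_0 = ((p ^ k * d)%N)%:Z \/ f`_0 = - ((p ^ k * d)%N)%:Z) ->
  ~~ (p %| (absz (f`_1)%R * d)%N)%N ->
  (forall theta : algC, root (map_poly intr f) theta -> d%:R < `|theta|) ->
  irreducible_in_Zx f.
Proof.
move=> prim pp k0 d0 Hf0 pf1 Hr.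
have f0 : absz (f`_0)%R = (p ^ k * d)%N by case: Hf0 => ->; rewrite ?abszN.
have pos : (1 < p ^ k * d)%N.
  apply: (@leq_trans (p ^ k)); last by rewrite leq_pmulr.
  apply: (@leq_trans p); first exact: prime_gt1.
  by rewrite -{1}(expn1 p) leq_pexp2l // prime_gt0.
have fn0 : f != 0.
  by apply/eqP => E; move: pos; rewrite -f0 E coef0.
split=> //; split.
  rewrite poly_unitE; apply/negP => /andP [_ /int_unit_abs].
  by rewrite f0 => E; move: pos; rewrite E.
move=> g h fgh.
case: (boolP (g \is a GRing.unit)) => gu; first by left.
case: (boolP (h \is a GRing.unit)) => hu; first by right.
exfalso.
case: (boolP (p %| absz (h`_0)%R)%N) => ph; last exact: (Lfac _ _ _ _ _ _ prim pp d0 f0 fn0 Hr fgh hu ph).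
case: (boolP (p %| absz (g`_0)%R)%N) => pg; last first.
  by apply: (Lfac _ _ _ _ _ _ prim pp d0 f0 fn0 Hr (_ : f = h * g) gu pg); rewrite mulrC.
move/negP: pf1; apply; apply: dvdn_mulr.
rewrite fgh coef1M.
have -> : (p %| absz (g`_0 * h`_1 + g`_1 * h`_0)%R)%N = (p%:Z %| g`_0 * h`_1 + g`_1 * h`_0)%Z by [].
by apply: rpredD; [apply: dvdz_mulr | apply: dvdz_mull].
Qed.
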